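(* Define polynomials $q_k(x)\in\mathbb{Z}[x]$ for integers $k\ge 0$ by $$q_0(x)=x^2-5x+3,\qquad q_1(x)=(x^3-8x^2+17x-5)(x-1),$$ $$q_k(x)=(x^2-4x+2)\,q_{k-1}(x)-q_{k-2}(x)\quad (k\ge 2).$$ Then for every integer $k\ge 0$, the polynomial $q_k(x)$ is divisible by $(x-1)$ if and only if $k\equiv 1 \pmod 3$.
   Context: The polynomials $q_k$ are, up to the factor $(x-2)^2$, the characteristic polynomials of $A_k^tA_k$, where $A_k$ is the even-to-odd incidence matrix of a certain bipartite tree $\Gamma_k$; this is background only and is not needed for the claim. *)

(* Defs.v *)
From mathcomp Require Import all_boot all_order all_algebra.
Set Implicit Arguments. Unset Strict Implicit. Unset Printing Implicit Defensive.
Import GRing.Theory.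
Local Open Scope ring_scope.

Definition q0 : {poly int} := 'X^2 - 5%:P * 'X + 3%:P.
Definition q1 : {poly int} :=
  ('X^3 - 8%:P * 'X^2 + 17%:P * 'X - 5%:P) * ('X - 1).

(* pair (q_k, q_{k+1}) *)
Fixpoint qpair (k : nat) : {poly int} * {poly int} :=
  match k with
  | 0%N => (q0, q1)
  | k'.+1 => let: (a, b) := qpair k' in
             (b, ('X^2 - 4%:P * 'X + 2%:P) * b - a)
  end.

Definition q (k : nat) : {poly int} := (qpair k).1.

(* Main.v *)
Require Import Defs.
From mathcomp Require Import all_boot all_order all_algebra.
Local Open Scope ring_scope.
From mathcomp Require Import ring.
Import GRing.Theory.

Definition ev (k : nat) : int * int := ((qpair k).1.[1], (qpair k).2.[1]).

Lemma evS k : ev k.+1 = ((ev k).2, - (ev k).2 - (ev k).1).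
Proof.
rewrite /ev /=; case: (qpair k) => a b /=.
rewrite !hornerE /=; congr (_, _); ring.
Qed.

Lemma ev3 k : ev (k.+3) = ev k.
Proof.
rewrite !evS; case: (ev k) => a b /=; congr (_, _); ring.
Qed.

Lemma evm j m : ev (3 * m + j)%N = ev j.
Proof.
elim: m => [|m IH]; first by rewrite muln0 add0n.
by rewrite mulnS -addnA addnC addn3 ev3.
Qed.

Lemma ev0 : ev 0 = (-1, 0).
Proof. by rewrite /ev /= /q0 /q1 !hornerE. Qed.

Theorem mainTheorem1 (k : nat) :
  (exists r : {poly int}, q k = ('X - 1) * r) <-> (k %% 3 = 1)%N.
Proof.
have Hr : (exists r : {poly int}, q k = ('X - 1) * r) <-> (q k).[1] == 0.
  split => [[r ->]| /factor_theorem [r Hr]].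
    by rewrite hornerM !hornerE.
  by exists r; rewrite Hr mulrC polyC1.
rewrite Hr.
have E : ev k = ev (k %% 3)%N by rewrite {1}(divn_eq k 3) mulnC evm.
have -> : (q k).[1] = (ev (k %% 3)%N).1 by rewrite -E.
have : (k %% 3 < 3)%N by rewrite ltn_pmod.
case: (k %% 3)%N => [|[|[|n]]] // _; rewrite ?evS ev0 /=; split => // /eqP //.
Qed.
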